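(* Let $n\ge1$, with notation as in the context. Then for $0\le l\le k,k_1\le n-1$, $$\sum_{i=1}^n f_{kl}(\alpha_i)f_{k_1l}(\alpha_i)T_1(\alpha_i)\cdots T_l(\alpha_i)=\delta_{k,k_1}c_{kl},$$ and for $0\le l\le n-1$ and all $i,j\in\{l+1,\dots,n\}$, $$\sum_{k=l}^{n-1}\frac{1}{c_{kl}}f_{kl}(\alpha_i)f_{kl}(\alpha_j)T_1(\alpha_i)\cdots T_l(\alpha_i)=\delta_{ij}.$$
   Context: Principal embedding of $\mathfrak{sl}(2)$ in $\mathfrak{gl}(n)$: $Y=\sum_{i=1}^{n-1}E_{i+1,i}$, $H=\sum_{i=1}^n(n-2i+1)E_{ii}$, $X=\sum_{i=1}^{n-1}i(n-i)E_{i,i+1}$. $\alpha_i=n-2i+1$, $T_i(H)=\frac14(n^2-(H+2i-1)^2)$; for a polynomial $f$, $f(H)=\mathrm{diag}(f(\alpha_1),\dots,f(\alpha_n))$. For $0\le l\le k\le n-1$, $f_{kl}$ is the unique polynomial of degree $<n-l$ with $(\mathrm{ad}\,Y)^{k-l}(X^k)=X^lf_{kl}(H)$. Empty products of $T$'s equal $1$. $c_{kl}=\dfrac{(k-l)!\,(k!)^2}{(k+l)!\,(2k+1)}\,n(n^2-1^2)\cdots(n^2-k^2)$. *)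

(* Defs.v *)
From HB Require Import structures.
From mathcomp Require Import all_boot all_order all_algebra.
Set Implicit Arguments. Unset Strict Implicit. Unset Printing Implicit Defensive.
Import Order.TTheory GRing.Theory Num.Theory.
Local Open Scope ring_scope.

Section Principal.
Variables (R : numFieldType) (n : nat).

(* alpha_i = n - 2i + 1, with i 1-based (i = 1..n) *)
Definition alpha (i : nat) : R := n%:R - 2 * i%:R + 1.

(* matrix index (0-based) j : 'I_n corresponds to the 1-based index j+1 *)
Definition Ymx : 'M[R]_n := \matrix_(i, j) (if i == j.+1 :> nat then 1 else 0).
Definition Xmx : 'M[R]_n :=
  \matrix_(i, j) (if i.+1 == j :> nat then (i.+1 * (n - i.+1))%:R else 0).
Definition polyH (f : {poly R}) : 'M[R]_n :=
  \matrix_(i, j) (if i == j then f.[alpha i.+1] else 0).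
Definition Hmx : 'M[R]_n := polyH 'X.

Definition mxpow (A : 'M[R]_n) (k : nat) : 'M[R]_n := iter k (mulmx A) 1%:M.
Definition adY (A : 'M[R]_n) : 'M[R]_n := Ymx *m A - A *m Ymx.

Definition Tval (i : nat) (x : R) : R :=
  (n%:R ^+ 2 - (x + 2 * i%:R - 1) ^+ 2) / 4.
Definition Tprod (l : nat) (x : R) : R := \prod_(1 <= m < l.+1) Tval m x.

Definition ckl (k l : nat) : R :=
  ((k - l)`! * (k`! ^ 2))%:R / (((k + l)`! * (2 * k + 1))%:R)
  * (n%:R * \prod_(1 <= m < k.+1) (n%:R ^+ 2 - m%:R ^+ 2)).

Definition is_fkl (k l : nat) (f : {poly R}) : Prop :=
  (size f <= n - l)%N /\
  iter (k - l) adY (mxpow Xmx k) = mxpow Xmx l *m polyH f.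
End Principal.
Arguments alpha {R} n i.

(* Main.v *)
Require Import Defs.
From HB Require Import structures.
From mathcomp Require Import all_boot all_order all_algebra.
From mathcomp Require Import ring lra zify.
Import Order.TTheory GRing.Theory Num.Theory.
Local Open Scope ring_scope.
Set Implicit Arguments. Unset Strict Implicit. Unset Printing Implicit Defensive.

Section Mx.
Variables (R : numFieldType) (m : nat).
Local Notation n := m.+1.

Definition dg (g : nat -> R) : 'M[R]_n := \matrix_(i, j) (if i == j then g i else 0).
Definition xx (i : nat) : R := (i.+1 * (n - i.+1))%:R.

Lemma sum_pick (c : nat) (F : 'I_n -> R) :
  \sum_(k < n) (if (k : nat) == c then F k else 0) = if (c < n)%N then F (inord c) else 0.
Proof.
case: ltnP => h.
  rewrite (bigD1 (inord c)) //= inordK // eqxx big1 ?addr0 // => k /negPf hk.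
  case: eqP => // e; move: hk; suff -> : k = inord c by rewrite eqxx.
  by apply: val_inj; rewrite /= inordK.
by rewrite big1 // => k _; rewrite ltn_eqF // (leq_trans (ltn_ord k) h).
Qed.

Lemma dg_mul a b : dg a *m dg b = dg (fun i => a i * b i).
Proof.
apply/matrixP => i j; rewrite !mxE.
rewrite (eq_bigr (fun k : 'I_n => if (k : nat) == i then
    (if i == j then a i * b i else 0) else 0)).
  by rewrite sum_pick ltn_ord.
move=> k _; rewrite !mxE; case: (eqVneq i k) => [<-|ne].
  by rewrite eqxx; case: eqP => _; rewrite ?mulr0.
rewrite mul0r; case: eqP => // e; case/eqP: ne; exact: val_inj.
Qed.

Lemma dg_tr a : (dg a)^T = dg a.
Proof. by apply/matrixP => i j; rewrite !mxE eq_sym; case: eqP => // ->. Qed.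

Lemma dg_trace a : \tr (dg a) = \sum_(i < n) a i.
Proof. by apply: eq_bigr => i _; rewrite mxE eqxx. Qed.

Lemma dg1 : dg (fun _ => 1) = 1%:M.
Proof. by apply/matrixP => i j; rewrite !mxE; case: eqP. Qed.

Lemma polyH_dg f : polyH n f = dg (fun i => f.[alpha n i.+1]).
Proof. by []. Qed.

Lemma Ymul (M : 'M[R]_n) i j :
  (Ymx R n *m M) i j = if (i : nat) is i'.+1 then M (inord i') j else 0.
Proof.
rewrite mxE; case: i => [[|i'] hi] /=.
  by rewrite big1 // => k _; rewrite mxE mul0r.
rewrite (eq_bigr (fun k : 'I_n => if (k : nat) == i' then M (inord i') j else 0)).
  by rewrite sum_pick ltnW.
move=> k _; rewrite mxE eqSS eq_sym; case: eqP => [e|]; last by rewrite mul0r.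
by rewrite mul1r; congr (M _ j); apply: val_inj; rewrite /= e inordK // ltnW.
Qed.

Lemma mulX (M : 'M[R]_n) i j :
  (M *m Xmx R n) i j = if (j : nat) is j'.+1 then M i (inord j') * xx j' else 0.
Proof.
rewrite mxE; case: j => [[|j'] hj] /=.
  by rewrite big1 // => k _; rewrite mxE mulr0.
rewrite (eq_bigr (fun k : 'I_n => if (k : nat) == j' then M i (inord j') * xx j' else 0)).
  by rewrite sum_pick ltnW.
move=> k _; rewrite mxE eqSS; case: eqP => [e|]; last by rewrite mulr0.
rewrite /xx -e; congr (M i _ * _); apply: val_inj; rewrite /= inordK //.
Qed.

Lemma Xmul (M : 'M[R]_n) i j :
  (Xmx R n *m M) i j = if (i.+1 < n)%N then xx i * M (inord i.+1) j else 0.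
Proof.
rewrite mxE.
rewrite (eq_bigr (fun k : 'I_n => if (k : nat) == i.+1 then xx i * M (inord i.+1) j else 0)).
  by rewrite sum_pick.
move=> k _; rewrite mxE eq_sym; case: eqP => [e|]; last by rewrite mul0r.
by rewrite /xx; congr (_ * M _ j); apply: val_inj; rewrite /= e inordK // -e.
Qed.

Lemma mulY (M : 'M[R]_n) i j :
  (M *m Ymx R n) i j = if (j.+1 < n)%N then M i (inord j.+1) else 0.
Proof.
rewrite mxE.
rewrite (eq_bigr (fun k : 'I_n => if (k : nat) == j.+1 then M i (inord j.+1) else 0)).
  by rewrite sum_pick.
move=> k _; rewrite mxE; case: eqP => [e|]; last by rewrite mulr0.
by rewrite mulr1; congr (M i _); apply: val_inj; rewrite /= e inordK // -e.
Qed.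


Lemma subE (A B : 'M[R]_n) i j : (A - B) i j = A i j - B i j.
Proof. by rewrite !mxE. Qed.
Lemma scaleE c (A : 'M[R]_n) i j : (c *: A) i j = c * A i j.
Proof. by rewrite !mxE. Qed.

Lemma R1 : Xmx R n *m Ymx R n - Ymx R n *m Xmx R n = Hmx R n.
Proof.
apply/matrixP => i j; rewrite subE Xmul Ymul /Hmx polyH_dg !mxE hornerX.
case: i j => [i hi] [j hj] /=.
have -> : (Ordinal hi == Ordinal hj) = (i == j) by [].
rewrite /alpha /xx.
case: (eqVneq i j) => [e|ne].
  subst j. case: i hi hj => [|i] hi hj /=.
    case: ifP => h; rewrite ?subr0.
      rewrite inordK // eqxx mulr1 natrM natrB //; ring.
    have -> : m = 0%N by lia.
    ring.
  rewrite mxE (inordK (ltnW hi)) eqxx.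
  case: ifP => h.
    rewrite inordK // eqxx mulr1 !natrM !natrB; try lia. ring.
  have -> : i = m.-1 by lia.
  rewrite natrM natrB; last by lia.
  have -> : (m.-1.+1 = m)%N by lia.
  ring.
case: ifP => h; rewrite ?inordK // ?eqSS ?(negPf ne) ?mulr0 ?sub0r.
  case: i hi ne h => [|i] hi ne h //=; rewrite ?oppr0 // mxE inordK ?(ltnW hi) //.
  case: eqP => [e|_]; [by move: ne; rewrite e /= eqxx | by rewrite oppr0].
case: i hi ne h => [|i] hi ne h //=; rewrite ?oppr0 // mxE inordK ?(ltnW hi) //.
case: eqP => [e|_]; [by move: ne; rewrite e /= eqxx | by rewrite oppr0].
Qed.
Lemma addE (A B : 'M[R]_n) i j : (A + B) i j = A i j + B i j.
Proof. by rewrite !mxE. Qed.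
Lemma oppE (A : 'M[R]_n) i j : (- A) i j = - A i j.
Proof. by rewrite !mxE. Qed.
Lemma dgmul g (M : 'M[R]_n) i j : (dg g *m M) i j = g i * M i j.
Proof.
rewrite mxE (eq_bigr (fun k : 'I_n => if (k : nat) == i then g i * M i j else 0)).
  by rewrite sum_pick ltn_ord.
move=> k _; rewrite mxE; case: (eqVneq i k) => [->|ne]; first by rewrite eqxx.
by rewrite mul0r; case: eqP => // e; case/eqP: ne; exact: val_inj.
Qed.
Lemma muldg g (M : 'M[R]_n) i j : (M *m dg g) i j = M i j * g j.
Proof.
rewrite mxE (eq_bigr (fun k : 'I_n => if (k : nat) == j then M i j * g j else 0)).
  by rewrite sum_pick ltn_ord.
move=> k _; rewrite mxE; case: (eqVneq k j) => [->|ne]; first by rewrite !eqxx.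
by rewrite mulr0; case: eqP => // e; case/eqP: ne; exact: val_inj.
Qed.

Local Notation X := (Xmx R n).
Local Notation Y := (Ymx R n).
Local Notation H := (Hmx R n).

Lemma R2 : H *m X - X *m H = 2 *: X.
Proof.
apply/matrixP => i j; rewrite /Hmx polyH_dg subE scaleE dgmul muldg !mxE !hornerX /alpha.
by case: (i.+1 =P j) => [e|_]; [rewrite -e; ring | rewrite !(mulr0, mul0r) subrr].
Qed.

Lemma R3 : H *m Y - Y *m H = - (2 *: Y).
Proof.
apply/matrixP => i j; rewrite /Hmx polyH_dg subE oppE scaleE dgmul muldg !mxE !hornerX /alpha.
by case: ((i : nat) =P j.+1) => [e|_]; [rewrite e; ring | rewrite !(mulr0, mul0r) subrr oppr0].
Qed.

Definition dd (i : nat) : R := \prod_(k < i) xx k.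

Lemma R4 : X^T *m dg dd = dg dd *m Y.
Proof.
apply/matrixP => i j; rewrite dgmul muldg !mxE.
case: eqP => [e|ne]; last first.
  by rewrite mul0r; case: eqP => [e|]; [case: ne; rewrite e | rewrite mulr0].
by rewrite -e eqxx mulr1 /dd big_ord_recr /= mulrC.
Qed.

Lemma dd_neq0 i : (i < n)%N -> dd i != 0.
Proof.
move=> hi; rewrite /dd prodf_seq_neq0; apply/allP => k _ /=.
have := ltn_ord k; rewrite /xx pnatr_eq0 muln_eq0 negb_or /=; lia.
Qed.

Definition ddi (i : nat) : R := (dd i)^-1.

Lemma dg_ext a b : (forall i, (i < n)%N -> a i = b i) -> dg a = dg b.
Proof. by move=> h; apply/matrixP => i j; rewrite !mxE h. Qed.

Lemma DDi : dg dd *m dg ddi = 1%:M.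
Proof. rewrite dg_mul -dg1; apply: dg_ext => i hi; rewrite /ddi mulfV // dd_neq0 //. Qed.
Lemma DiD : dg ddi *m dg dd = 1%:M.
Proof. rewrite dg_mul -dg1; apply: dg_ext => i hi; rewrite /ddi mulVf // dd_neq0 //. Qed.

Lemma R5 : dg ddi *m X^T = Y *m dg ddi.
Proof.
rewrite -[dg ddi *m X^T]mulmx1 -DDi mulmxA -(mulmxA (dg ddi)) R4.
by rewrite mulmxA DiD mul1mx.
Qed.

Definition br (A B : 'M[R]_n) := A *m B - B *m A.

Lemma jacobi A B C : br A (br B C) = br B (br A C) + br (br A B) C.
Proof.
rewrite /br !mulmxBl !mulmxBr !mulmxA; apply/matrixP => i j.
rewrite !(subE, addE); ring.
Qed.

Lemma leibniz A B C : br A (B *m C) = br A B *m C + B *m br A C.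
Proof.
rewrite /br !mulmxBl !mulmxBr !mulmxA; apply/matrixP => i j.
rewrite !(subE, addE); ring.
Qed.

Lemma brZl c A B : br (c *: A) B = c *: br A B.
Proof. by rewrite /br -scalemxAl -scalemxAr scalerBr. Qed.
Lemma brZr c A B : br A (c *: B) = c *: br A B.
Proof. by rewrite /br -scalemxAl -scalemxAr scalerBr. Qed.

Lemma adYE A : adY A = br Y A.
Proof. by []. Qed.

Lemma brHY : br H Y = - (2 *: Y). Proof. exact: R3. Qed.
Lemma brXY : br X Y = H. Proof. exact: R1. Qed.
Lemma brHX : br H X = 2 *: X. Proof. exact: R2. Qed.

Lemma J1 w : br H (br Y w) = br Y (br H w) - 2 *: br Y w.
Proof. by rewrite jacobi brHY -scaleNr brZl scaleNr. Qed.

Lemma J2 w : br X (br Y w) = br Y (br X w) + br H w.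
Proof. by rewrite jacobi brXY. Qed.

Local Notation aY := (@adY R n).
Lemma mxpowS (A : 'M[R]_n) k : mxpow A k.+1 = A *m mxpow A k.
Proof. by []. Qed.
Lemma mxpowSr (A : 'M[R]_n) k : mxpow A k.+1 = mxpow A k *m A.
Proof.
elim: k => [|k IH]; first by rewrite /mxpow /= mulmx1 mul1mx.
by rewrite [LHS]mxpowS {1}IH mulmxA.
Qed.

Lemma brX_Xk k : br X (mxpow X k) = 0.
Proof. by rewrite /br -mxpowSr mxpowS subrr. Qed.

Lemma brH_Xk k : br H (mxpow X k) = (2 * k%:R) *: mxpow X k.
Proof.
elim: k => [|k IH].
  by rewrite /br /mxpow /= mulmx1 mul1mx subrr mulr0 scale0r.
rewrite mxpowS leibniz brHX IH -scalemxAl -scalemxAr -scalerDl; congr (_ *: _).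
rewrite -addn1 natrD; ring.
Qed.

Section HW.
Variables (v : 'M[R]_n) (lam : R).
Hypotheses (hv1 : br X v = 0) (hv2 : br H v = lam *: v).

Lemma iterY_H j : br H (iter j aY v) = (lam - 2 * j%:R) *: iter j aY v.
Proof.
elim: j => [|j IH]; first by rewrite /= hv2 mulr0 subr0.
rewrite /= adYE J1 IH brZr -scalerBl; congr (_ *: _).
rewrite -addn1 natrD; ring.
Qed.

Lemma iterY_X j : br X (iter j.+1 aY v) = ((j.+1)%:R * (lam - j%:R)) *: iter j aY v.
Proof.
elim: j => [|j IH]; first by rewrite /= adYE J2 hv1 hv2 /br mul0mx mulmx0 subrr add0r mul1r subr0.
rewrite [iter j.+2 aY v]/= adYE J2 IH brZr (iterY_H j.+1) -adYE -scalerDl; congr (_ *: _).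
ring.
Qed.

Lemma iter_brX_Z b c w : iter b (br X) (c *: w) = c *: iter b (br X) w.
Proof. by elim: b => [|b IH] //=; rewrite IH brZr. Qed.

Lemma iter_brX_0 b : iter b (br X) 0 = 0.
Proof. by rewrite -(scale0r 0) iter_brX_Z !scale0r. Qed.

Lemma Gb b : iter b (br X) (iter b aY v) =
  (\prod_(j < b) ((j.+1)%:R * (lam - j%:R))) *: v.
Proof.
elim: b => [|b IH]; first by rewrite big_ord0 scale1r.
by rewrite iterSr iterY_X iter_brX_Z IH scalerA big_ord_recr /= mulrC.
Qed.

Lemma Zab a b : (b < a)%N -> iter a (br X) (iter b aY v) = 0.
Proof.
move=> hab; have -> : a = ((a - b.+1) + b.+1)%N by lia.
by rewrite iterD /= Gb brZr hv1 scaler0 iter_brX_0.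
Qed.
End HW.

Definition fm (A B : 'M[R]_n) := \tr (A *m dg ddi *m B^T *m dg dd).

Lemma fm_adj A B : fm (adY A) B = fm A (br X B).
Proof.
have h1 : \tr (Y *m A *m dg ddi *m B^T *m dg dd) = \tr (A *m dg ddi *m (X *m B)^T *m dg dd).
  rewrite trmx_mul !mulmxA -(mulmxA _ X^T) R4 mulmxA [RHS]mxtrace_mulC !mulmxA //.
have h2 : \tr (A *m Y *m dg ddi *m B^T *m dg dd) = \tr (A *m dg ddi *m (B *m X)^T *m dg dd).
  rewrite trmx_mul !mulmxA -(mulmxA A (dg ddi) X^T) R5 !mulmxA //.
rewrite /fm /adY /br !mulmxBl linearB /= h1 h2.
by rewrite linearB /= mulmxBr mulmxBl linearB.
Qed.

Lemma fm_iter a A B : fm (iter a aY A) B = fm A (iter a (br X) B).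
Proof.
elim: a B => [|a IH] B //=.
by rewrite fm_adj IH -iterSr.
Qed.

Lemma fmZ A c B : fm A (c *: B) = c * fm A B.
Proof. by rewrite /fm linearZ /= -scalemxAr -scalemxAl mxtraceZ. Qed.

Lemma fm0 A : fm A 0 = 0.
Proof. by rewrite -(scale0r 0) fmZ mul0r. Qed.

Fixpoint tt (l i : nat) : R :=
  match l with 0 => 1 | l'.+1 => match i with 0 => 0 | i'.+1 => tt l' i' * xx i' end end.

Lemma YdgX g : Y *m dg g *m X = dg (fun i => if i is i'.+1 then g i' * xx i' else 0).
Proof.
apply/matrixP => i j; rewrite mulX !mxE.
case: j => [[|j] hj] /=.
  by case: eqP => // e; case: i e => [[|i] hi] //= e; rewrite -e.
rewrite Ymul; case: i => [[|i] hi] /=; first by rewrite mul0r.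
have -> : (Ordinal hi == Ordinal hj) = (i.+1 == j.+1) by [].
rewrite mxE -val_eqE /= !inordK ?(ltnW hi) ?(ltnW hj) // eqSS.
by case: eqP => [->|]; rewrite ?mul0r.
Qed.

Lemma YlXl l : mxpow Y l *m mxpow X l = dg (tt l).
Proof.
elim: l => [|l IH]; first by rewrite /mxpow /= mulmx1 -dg1.
by rewrite mxpowS mxpowSr mulmxA -(mulmxA Y) IH YdgX.
Qed.

Lemma XlT l : (mxpow X l)^T *m dg dd = dg dd *m mxpow Y l.
Proof.
elim: l => [|l IH]; first by rewrite /mxpow /= trmx1 mulmx1 mul1mx.
by rewrite mxpowS trmx_mul -mulmxA R4 mulmxA IH -mulmxA -mxpowSr.
Qed.

Lemma fm_diag l a b :
  fm (mxpow X l *m dg a) (mxpow X l *m dg b) = \sum_(i < n) a i * b i * tt l i.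
Proof.
rewrite /fm trmx_mul dg_tr !mulmxA -(mulmxA _ _ (dg dd)) XlT !mulmxA.
have -> : mxpow X l *m dg a *m dg ddi *m dg b *m dg dd
          = mxpow X l *m dg (fun i => a i * b i).
  rewrite -!mulmxA !dg_mul; congr (_ *m _); apply: dg_ext => i hi.
  rewrite /ddi; field; exact: dd_neq0.
by rewrite -mulmxA mxtrace_mulC -mulmxA YlXl dg_mul dg_trace.
Qed.

End Mx.

Lemma sumCC N a b : (\sum_(q < N.+1) 'C(q, a) * 'C(N - q, b) = 'C(N.+1, a + b + 1))%N.
Proof.
move: b; elim: N => [|N IH] b.
  rewrite big_ord1 subn0.
  case: a => [|a]; case: b => [|b] //=; rewrite [RHS]bin_small ?bin0n ?muln0 ?mul0n //; lia.
rewrite big_ord_recr /= subnn.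
have E : forall q : 'I_N.+1, (N.+1 - q = (N - q).+1)%N.
  by move=> q; have := ltn_ord q; lia.
case: b => [|b].
  rewrite bin0 muln1 (eq_bigr (fun q : 'I_N.+1 => 'C(q, a) * 'C(N - q, 0))%N); last first.
    by move=> q _; rewrite !bin0.
  by rewrite IH !addn0 addn1 binS.
rewrite muln0 addn0 (eq_bigr (fun q : 'I_N.+1 => 'C(q, a) * 'C(N - q, b.+1) + 'C(q, a) * 'C(N - q, b))%N); last first.
  by move=> q _; rewrite E binS mulnDr.
rewrite big_split /= !IH.
have -> : (a + b.+1 + 1 = (a + b + 1).+1)%N by lia.
by rewrite binS.
Qed.

Section Num.
Variables (R : numFieldType) (m : nat).
Local Notation n := m.+1.

Lemma Tval_alpha k p : Tval n k (alpha n p) = (p%:R - k%:R) * (n%:R - p%:R + k%:R) :> R.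
Proof. rewrite /Tval /alpha; by field. Qed.

Lemma TvalS k i : Tval n k.+1 (alpha n i.+1) = Tval n k (alpha n i) :> R.
Proof. rewrite /Tval /alpha; by field. Qed.

Lemma tt_Tprod l i : (i < n)%N -> tt R m l i = Tprod n l (alpha n i.+1).
Proof.
elim: l i => [|l IH] i hi.
  by rewrite /Tprod big_geq.
rewrite /Tprod big_ltn // big_add1 /=.
under eq_bigr do rewrite TvalS.
case: i hi => [|i] hi /=.
  by rewrite Tval_alpha subrr mul0r mul0r.
rewrite IH ?(ltnW hi) // /Tprod mulrC; congr (_ * _).
rewrite Tval_alpha /xx natrM natrB ?(ltnW hi) //; ring.
Qed.

Lemma P1 i k : \prod_(1 <= j < k.+1) ((i.+1)%:R - j%:R) = (i ^_ k)%:R :> R.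
Proof.
elim: k => [|k IH]; first by rewrite big_geq // ffactn0.
rewrite big_nat_recr //= IH ffactnSr.
case: (leqP k i) => h.
  by rewrite natrM natrB //; congr (_ * _); ring.
by rewrite ffact_small // mul0r mul0n.
Qed.

Lemma P2 q k : \prod_(1 <= j < k.+1) (q%:R + j%:R) = ((q + k) ^_ k)%:R :> R.
Proof.
elim: k => [|k IH]; first by rewrite big_geq // ffactn0.
by rewrite big_nat_recr //= IH addnS ffactSS natrM [RHS]mulrC -addnS natrD.
Qed.

Lemma Tprod_nat k i : (i < n)%N ->
  Tprod n k (alpha n i.+1) = (i ^_ k * (n - i.+1 + k) ^_ k)%:R :> R.
Proof.
move=> hi; rewrite /Tprod.
under eq_bigr do rewrite Tval_alpha.
rewrite big_split /= P1 natrM; congr (_ * _).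
rewrite -P2; apply: eq_bigr => j _; rewrite natrB //; ring.
Qed.

Lemma sumTprod k : (k < n)%N ->
  \sum_(i < n) Tprod n k (alpha n i.+1) = (k`! ^ 2 * 'C(n + k, k.*2.+1))%:R :> R.
Proof.
move=> hk.
rewrite (eq_bigr (fun i : 'I_n => ((k`! ^ 2) * ('C(i, k) * 'C(m + k - i, k)))%:R)); last first.
  move=> i _; rewrite Tprod_nat // -!bin_ffact; congr (_%:R).
  have -> : (n - i.+1 + k = m + k - i)%N by have := ltn_ord i; lia.
  by rewrite expnS expn1; lia.
rewrite -natr_sum -big_distrr /=; congr ((_ * _)%:R).
have := sumCC (m + k) k k.
rewrite -(big_mkord xpredT (fun q => 'C(q, k) * 'C(m + k - q, k))%N).
rewrite (big_cat_nat _ (n := n)) //=; last by lia.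
rewrite [X in (_ + X)%N]big1_seq ?addn0; last first.
  move=> q /andP [_]; rewrite mem_index_iota => /andP [h1 h2].
  by rewrite (bin_small (n := m + k - q)) ?muln0 //; lia.
rewrite big_mkord => ->.
by congr 'C(_, _); lia.
Qed.

Lemma P3 a c : (a <= c)%N ->
  \prod_(j < a) ((j.+1)%:R * (c%:R - j%:R)) = (a`! * c ^_ a)%:R :> R.
Proof.
elim: a => [|a IH] h; first by rewrite big_ord0 fact0 ffactn0.
rewrite big_ord_recr /= IH ?(ltnW h) // factS ffactnSr !natrM natrB ?(ltnW h) //.
ring.
Qed.

Lemma P4 k : (k < n)%N ->
  n%:R * \prod_(1 <= j < k.+1) (n%:R ^+ 2 - j%:R ^+ 2) = ((n + k) ^_ k.*2.+1)%:R :> R.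
Proof.
elim: k => [|k IH] h; first by rewrite big_geq // mulr1 addn0 ffactn1.
rewrite big_nat_recr //= mulrA IH ?(ltnW h) //.
have E : ((n + k.+1) ^_ (k.+1).*2.+1 = (n + k).+1 * ((n + k) ^_ k.*2.+1 * (m - k)))%N.
  rewrite doubleS addnS ffactSS (ffactnSr (n + k) k.*2.+1).
  by congr (_ * (_ * _))%N; lia.
rewrite E !natrM natrB; last by lia.
ring.
Qed.

End Num.

Section Final.
Variables (R : numFieldType) (m : nat).
Local Notation n := m.+1.
Local Notation X := (Xmx R n).
Local Notation aY := (@adY R n).

Lemma cklE k l : (l <= k)%N -> (k < n)%N ->
  ((k - l)`! * (k.*2) ^_ (k - l))%:R * (k`! ^ 2 * 'C(n + k, k.*2.+1))%:R = ckl R n k l.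
Proof.
move=> hl hk.
rewrite /ckl P4 //.
have N1 : ((k - l)`! * (k.*2) ^_ (k - l) * (k`! ^ 2 * 'C(n + k, k.*2.+1)) * ((k + l)`! * (2 * k + 1))
          = (k - l)`! * k`! ^ 2 * (n + k) ^_ k.*2.+1)%N.
  have e1 := ffact_fact (_ : (k - l <= k.*2)%N).
  have e2 : (k.*2 - (k - l) = k + l)%N by lia.
  rewrite -(bin_ffact (n + k)) factS.
  have e3 : (2 * k + 1 = k.*2.+1)%N by lia.
  rewrite e3 -(e1 ltac:(lia)) e2.
  ring.
have hD : (((k + l)`! * (2 * k + 1))%:R : R) != 0.
  by rewrite pnatr_eq0 muln_eq0 negb_or -!lt0n fact_gt0 /=; lia.
apply: (mulIf hD).
by rewrite -natrM -natrM N1 natrM [RHS]mulrAC divfK.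
Qed.

Lemma part1_aux (f : nat -> nat -> {poly R}) :
  (forall k l, (l <= k <= m)%N -> is_fkl n k l (f k l)) ->
  forall l k k1, (l <= k1)%N -> (k1 <= k)%N -> (k <= m)%N ->
     \sum_(i < n) (f k l).[alpha n i.+1] * (f k1 l).[alpha n i.+1]
                  * Tprod n l (alpha n i.+1)
     = if k == k1 then ckl R n k l else 0.
Proof.
move=> hf l k k1 h1 h2 h3.
have [_ Ek] := hf k l ltac:(apply/andP; split; lia).
have [_ Ek1] := hf k1 l ltac:(apply/andP; split; lia).
have -> : \sum_(i < n) (f k l).[alpha n i.+1] * (f k1 l).[alpha n i.+1]
                  * Tprod n l (alpha n i.+1)
   = fm (mxpow X l *m polyH n (f k l)) (mxpow X l *m polyH n (f k1 l)).
  rewrite !polyH_dg fm_diag; apply: eq_bigr => i _; rewrite tt_Tprod //.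
rewrite -Ek -Ek1 fm_iter.
have hv1 : br X (mxpow X k1) = 0 by exact: brX_Xk.
have hv2 : br (Hmx R n) (mxpow X k1) = (2 * k1%:R) *: mxpow X k1 by exact: brH_Xk.
case: eqP => [e|ne].
  subst k1.
  rewrite (Gb hv1 hv2) fmZ.
  have -> : fm (mxpow X k) (mxpow X k) = \sum_(i < n) Tprod n k (alpha n i.+1).
    rewrite -[mxpow X k]mulmx1 -dg1 fm_diag; apply: eq_bigr => i _.
    by rewrite !mul1r tt_Tprod.
  rewrite sumTprod; last by lia.
  have hkn : (k < n)%N by lia.
  rewrite -(cklE h1 hkn).
  congr (_ * _).
  have -> : 2 * k%:R = (k.*2)%:R :> R by rewrite -mul2n natrM.
  rewrite P3 //; lia.
rewrite (Zab hv1 hv2); first by rewrite fm0.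
lia.
Qed.


Lemma part1 (f : nat -> nat -> {poly R}) :
  (forall k l, (l <= k <= m)%N -> is_fkl n k l (f k l)) ->
  forall l k k1, (l <= k <= m)%N -> (l <= k1 <= m)%N ->
     \sum_(i < n) (f k l).[alpha n i.+1] * (f k1 l).[alpha n i.+1]
                  * Tprod n l (alpha n i.+1)
     = if k == k1 then ckl R n k l else 0.
Proof.
move=> hf l k k1 /andP [h1 h2] /andP [h3 h4].
case: (leqP k1 k) => h.
  exact: part1_aux.
rewrite (eq_bigr (fun i : 'I_n => (f k1 l).[alpha n i.+1] * (f k l).[alpha n i.+1]
                  * Tprod n l (alpha n i.+1))); last by move=> i _; rewrite (mulrC (f k l).[_]).
rewrite part1_aux //; last by lia.
by rewrite gtn_eqF // ltn_eqF.
Qed.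

Lemma ckl_neq0 k l : (l <= k)%N -> (k < n)%N -> ckl R n k l != 0.
Proof.
move=> h1 h2; rewrite -cklE // mulf_neq0 // pnatr_eq0 -lt0n !muln_gt0 fact_gt0 /=.
  by rewrite ffact_gt0; lia.
by rewrite bin_gt0; lia.
Qed.

Lemma Tprod_small l i : (i < l)%N -> (l <= m)%N -> Tprod n l (alpha n i.+1) = 0 :> R.
Proof.
move=> h1 h2; rewrite Tprod_nat; last by lia.
by rewrite ffact_small // mul0n.
Qed.

Lemma sum_from (G : nat -> R) l :
  \sum_(l <= k < n) G k = \sum_(a < n - l) G (a + l)%N.
Proof. by rewrite -{1}(add0n l) big_addn big_mkord. Qed.

Lemma sum_shift (F : nat -> R) l : (forall i, (i < l)%N -> F i = 0) -> (l <= n)%N ->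
  \sum_(i < n) F i = \sum_(b < n - l) F (b + l)%N.
Proof.
move=> h hl.
rewrite -(big_mkord xpredT F) (big_cat_nat _ (n := l)) //= big1_seq ?add0r; last first.
  by move=> i /andP [_]; rewrite mem_index_iota => /andP [_ hi]; apply: h.
exact: sum_from.
Qed.

Lemma part2 (f : nat -> nat -> {poly R}) :
  (forall k l, (l <= k <= m)%N -> is_fkl n k l (f k l)) ->
  forall l, (l <= m)%N -> forall i j : 'I_n, (l <= i)%N -> (l <= j)%N ->
     \sum_(l <= k < n) (ckl R n k l)^-1 * (f k l).[alpha n i.+1]
                       * (f k l).[alpha n j.+1] * Tprod n l (alpha n i.+1)
     = if i == j then 1 else 0.
Proof.
move=> hf l hl i j hi hj.
pose d := (n - l)%N.
pose P := \matrix_(a < d, b < d) (f (a + l)%N l).[alpha n (b + l)%N.+1].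
pose A := \matrix_(b < d, a < d) (Tprod n l (alpha n (b + l)%N.+1) * P a b).
pose B := \matrix_(a < d, b < d) ((ckl R n (a + l)%N l)^-1 * P a b).
have BA : B *m A = 1%:M.
  apply/matrixP => a a'; rewrite !mxE.
  have ha := ltn_ord a; have ha' := ltn_ord a'.
  have S := part1 hf (l := l) (k := (a + l)%N) (k1 := (a' + l)%N)
               ltac:(apply/andP; split; lia) ltac:(apply/andP; split; lia).
  rewrite (sum_shift (l := l) (F := fun i => (f (a + l)%N l).[alpha n i.+1] * (f (a' + l)%N l).[alpha n i.+1]
                  * Tprod n l (alpha n i.+1))) in S; last by lia.
    2: by move=> i0 h0 /=; rewrite Tprod_small // mulr0.
  rewrite (eq_bigr (fun b : 'I_d => (ckl R n (a + l)%N l)^-1 *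
      ((f (a + l)%N l).[alpha n (b + l)%N.+1] * (f (a' + l)%N l).[alpha n (b + l)%N.+1]
                  * Tprod n l (alpha n (b + l)%N.+1)))); last first.
    by move=> b _; rewrite !mxE; ring.
  rewrite -big_distrr /= S eqn_add2r.
  case: (eqVneq a a') => [e|ne].
    by rewrite e eqxx mulVf // ckl_neq0 //; lia.
  have -> : ((a : nat) == a') = false by apply/negbTE.
  by rewrite mulr0.
have AB := mulmx1C BA.
have hb : (i - l < d)%N by rewrite /d; have := ltn_ord i; lia.
have hb' : (j - l < d)%N by rewrite /d; have := ltn_ord j; lia.
have := congr1 (fun M : 'M[R]_d => M (Ordinal hb) (Ordinal hb')) AB.
rewrite !mxE /= => E.
rewrite sum_from.
rewrite (eq_bigr (fun a : 'I_d => A (Ordinal hb) a * B a (Ordinal hb'))); last first.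
  by move=> a _; rewrite /A /B /P !mxE /= !subnK //; ring.
rewrite E.
have -> : (Ordinal hb == Ordinal hb') = (i == j).
  rewrite -val_eqE /=; apply/eqP/eqP => [h|->] //.
  apply: val_inj => /=; lia.
by case: (i == j).
Qed.

End Final.

Theorem proposition8p3p1 (R : numFieldType) (n : nat) (f : nat -> nat -> {poly R}) :
  (0 < n)%N ->
  (forall k l, (l <= k <= n.-1)%N -> is_fkl n k l (f k l)) ->
  (forall l k k1, (l <= k <= n.-1)%N -> (l <= k1 <= n.-1)%N ->
     \sum_(i < n) (f k l).[alpha n i.+1] * (f k1 l).[alpha n i.+1]
                  * Tprod n l (alpha n i.+1)
     = if k == k1 then ckl R n k l else 0)
  /\
  (forall l, (l <= n.-1)%N -> forall i j : 'I_n, (l <= i)%N -> (l <= j)%N ->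
     \sum_(l <= k < n) (ckl R n k l)^-1 * (f k l).[alpha n i.+1]
                       * (f k l).[alpha n j.+1] * Tprod n l (alpha n i.+1)
     = if i == j then 1 else 0).
Proof.
case: n => [|m] // _ hf; split.
  exact: part1.
exact: part2.
Qed.
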